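(* Let $\gamma > 1.755$ and let $I$ be a $\gamma$-stable instance of the metric Steiner tree problem with optimal Steiner tree $\mathrm{OPT}$, such that no two Steiner points are adjacent in $\mathrm{OPT}$. Let $H$ be a subgraph of $\mathrm{OPT}$. Suppose $T(a, \bar b)$, with $\bar b = (b_1, \ldots, b_m)$, is a terminal component fan relative to $H$ such that: (i) the average weight of $T(a, \bar b)$ is less than the weight of every edge not in $H$ that connects two distinct terminal components of $H$; (ii) the average weight of $T(a, \bar b)$ is minimal among the average weights of all terminal component fans relative to $H$; (iii) the edges of $T(a, \bar b)$ are all within a factor of $\frac{1}{\gamma - 1}$ of each other, i.e. $w_{ab_i} \le \frac{1}{\gamma - 1} w_{ab_j}$ for all $i, j$. Then $T(a, \bar b)$ is a subgraph of $\mathrm{OPT}$, i.e. $ab_i$ is an edge of $\mathrm{OPT}$ for every $i$.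
   Context: An instance of the metric Steiner tree problem consists of a finite set $V$ of points of a metric space with metric $d$, a set $T \subseteq V$ of terminals, and the complete graph on $V$ with edge weights $w_{uv} = d(u,v)$. Points of $V \setminus T$ are Steiner points. A Steiner tree is a tree in this complete graph whose vertex set contains all of $T$; its weight is the sum of its edge weights. For $\gamma > 1$, the instance is $\gamma$-stable if it has a minimum-weight Steiner tree $\mathrm{OPT}$ such that for every $w' : V \times V \to \mathbb{R}_{\ge 0}$ with $w_{uv} \le w'_{uv} \le \gamma w_{uv}$ for all $u,v$, every minimum-weight Steiner tree with respect to $w'$ equals $\mathrm{OPT}$. For vertices $a$ and $\bar b = (b_1, \ldots, b_m)$ with $m \ge 2$, $T(a, \bar b)$ denotes the star on vertex set $\{a, b_1, \ldots, b_m\}$ with edges $ab_1, \ldots, ab_m$; its average weight is $\frac{\sum_{i=1}^m w_{ab_i}}{m - 1}$. For a subgraph $H$ of $\mathrm{OPT}$, the terminal components of $H$ are the connected components of $H$ together with the terminals not in $V(H)$ (each as a singleton). $T(a, \bar b)$ is a terminal component fan relative to $H$ if $a$ is a Steiner point and each $b_i$ is either a terminal or a vertex of a connected component of $H$ having at least two vertices, with the $b_i$ lying in pairwise distinct terminal components of $H$. *)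

(* Defs.v *)
From HB Require Import structures.
From mathcomp Require Import all_boot all_order all_algebra.
Set Implicit Arguments. Unset Strict Implicit. Unset Printing Implicit Defensive.
Import Order.TTheory GRing.Theory Num.Theory.
Local Open Scope ring_scope.

(* Graphs on a finite vertex type V: a vertex set S and an edge set F whose
   elements are unordered pairs [set u; v] with u != v. *)

Definition edge_rel (V : finType) (F : {set {set V}}) : rel V :=
  fun u v => [set u; v] \in F.

Definition is_tree (V : finType) (S : {set V}) (F : {set {set V}}) : Prop :=
  [/\ S != set0,
      (forall e, e \in F -> exists u v, [/\ u != v, u \in S, v \in S & e = [set u; v]]),
      (forall u v, u \in S -> v \in S -> connect (edge_rel F) u v)
    & #|F| = (#|S| - 1)%N].

Definition steiner_tree (V : finType) (T S : {set V}) (F : {set {set V}}) : Prop :=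
  is_tree S F /\ T \subset S.

(* Weight of an edge set w.r.t. w : V -> V -> R; each unordered edge {u,v}
   is counted through both ordered pairs, so the weight of edge uv is
   (w u v + w v u)/2 (= w u v when w is symmetric). *)
Definition tree_weight (R : realFieldType) (V : finType) (w : V -> V -> R)
  (F : {set {set V}}) : R :=
  (\sum_(p : V * V | [set p.1; p.2] \in F) w p.1 p.2) / 2%:R.

Definition min_steiner_tree (R : realFieldType) (V : finType) (T : {set V})
  (w : V -> V -> R) (S : {set V}) (F : {set {set V}}) : Prop :=
  steiner_tree T S F /\
  forall S' F', steiner_tree T S' F' -> tree_weight w F <= tree_weight w F'.

Definition is_metric (R : realFieldType) (V : finType) (d : V -> V -> R) : Prop :=
  forall x y z, [/\ 0 <= d x y, d x y = 0 <-> x = y, d x y = d y x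
                  & d x z <= d x y + d y z].

Definition gamma_stable (R : realFieldType) (V : finType) (d : V -> V -> R)
  (T : {set V}) (gamma : R) (S : {set V}) (F : {set {set V}}) : Prop :=
  min_steiner_tree T d S F /\
  forall w' : V -> V -> R,
    (forall u v, d u v <= w' u v <= gamma * d u v) ->
    forall S' F', min_steiner_tree T w' S' F' -> S' = S /\ F' = F.

Definition is_subgraph (V : finType) (SH : {set V}) (FH : {set {set V}})
  (S : {set V}) (F : {set {set V}}) : Prop :=
  [/\ SH \subset S, FH \subset F &
      forall u v, [set u; v] \in FH -> u \in SH /\ v \in SH].

Definition in_nontrivial_comp (V : finType) (SH : {set V}) (FH : {set {set V}})
  (x : V) : Prop :=
  x \in SH /\ exists y, y != x /\ connect (edge_rel FH) x y.

(* x belongs to some terminal component of H. *)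
Definition in_terminal_comp (V : finType) (T SH : {set V}) (x : V) : Prop :=
  x \in SH \/ x \in T.

(* Two vertices lying in terminal components lie in the same terminal
   component iff they are connected in H (reflexive). *)
Definition same_terminal_comp (V : finType) (FH : {set {set V}}) (x y : V) : bool :=
  connect (edge_rel FH) x y.

Definition tc_fan (V : finType) (T SH : {set V}) (FH : {set {set V}})
  (a : V) (m : nat) (b : 'I_m -> V) : Prop :=
  [/\ (2 <= m)%N, a \notin T,
      (forall i, b i != a),
      (forall i, b i \in T \/ in_nontrivial_comp SH FH (b i))
    & forall i j, i != j -> ~~ same_terminal_comp FH (b i) (b j)].

Definition avg_weight (R : realFieldType) (V : finType) (d : V -> V -> R)
  (a : V) (m : nat) (b : 'I_m -> V) : R :=
  (\sum_(i < m) d a (b i)) / (m.-1)%:R.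

(* Main.v *)
Require Import Defs.
From HB Require Import structures.
From mathcomp Require Import all_boot all_order all_algebra.
From Stdlib Require Import Classical.
From mathcomp Require Import ring lra zify.
Import Order.TTheory GRing.Theory Num.Theory.
Local Open Scope ring_scope.
Set Implicit Arguments. Unset Strict Implicit.

Lemma edge_relC (V : finType) (F : {set {set V}}) : symmetric (edge_rel F).
Proof. by move=> u v; rewrite /edge_rel setUC. Qed.

Lemma connC (V : finType) (F : {set {set V}}) : connect_sym (edge_rel F).
Proof. exact: sym_connect_sym (@edge_relC V F). Qed.

Lemma conn_inv (V : finType) (e : rel V) (P : pred V) x y :
  P x -> (forall u v, P u -> e u v -> P v) -> connect e x y -> P y.
Proof.
move=> Px Hc /connectP [p]; elim: p x Px => [|z p IH] x Px /=; first by move=> _ ->.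
by case/andP=> exz pz; exact: IH (Hc _ _ Px exz) pz.
Qed.

Lemma conn_cross (V : finType) (e : rel V) (P : pred V) x y :
  connect e x y -> P x -> ~~ P y -> exists u v, [/\ e u v, P u & ~~ P v].
Proof.
move=> /connectP [p]; elim: p x => [|z p IH] x /=; first by move=> _ -> ->.
case/andP=> exz pz ey Px nPy.
case Pz: (P z); first by apply: (IH z pz ey Pz nPy).
by exists x, z; rewrite Pz.
Qed.

Lemma set2_eq (V : finType) (u v p q : V) :
  [set u; v] = [set p; q] -> (u = p /\ v = q) \/ (u = q /\ v = p).
Proof.
move=> E.
have uin : u \in [set p; q] by rewrite -E set21.
have vin : v \in [set p; q] by rewrite -E set22.
have pin : p \in [set u; v] by rewrite E set21.
have qin : q \in [set u; v] by rewrite E set22.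
case/set2P: uin => ?; case/set2P: vin => ?; case/set2P: pin => ?; case/set2P: qin => ?;
  subst; by [left|right].
Qed.

Lemma conn_add1 (V : finType) (K : {set {set V}}) (e0 : {set V}) x z :
  connect (edge_rel (K :|: [set e0])) x z ->
  connect (edge_rel K) x z \/ exists2 w, w \in e0 & connect (edge_rel K) x w.
Proof.
move=> H.
pose P : pred V := [pred z | connect (edge_rel K) x z || [exists w in e0, connect (edge_rel K) x w]].
have : P z.
  apply: (conn_inv _ _ H); first by rewrite /P /= connect0.
  move=> u v; rewrite /P /= => /orP [cxu|->]; last by rewrite orbT.
  rewrite /edge_rel in_setU in_set1 => /orP [uvK|/eqP E].
    by rewrite (connect_trans cxu (connect1 uvK)).
  by apply/orP; right; apply/existsP; exists u; rewrite -E set21 cxu.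
rewrite /P /= => /orP [->|/existsP [w /andP [we cw]]]; first by left.
by right; exists w.
Qed.

Lemma conn_add2 (V : finType) (K : {set {set V}}) (e0 : {set V}) x y :
  connect (edge_rel (K :|: [set e0])) x y ->
  connect (edge_rel K) x y \/
  ((exists2 w, w \in e0 & connect (edge_rel K) x w) /\
   (exists2 w, w \in e0 & connect (edge_rel K) y w)).
Proof.
move=> H; have H' : connect (edge_rel (K :|: [set e0])) y x by rewrite connC.
case: (conn_add1 H) => [|hx]; first by left.
case: (conn_add1 H') => [c|hy]; first by left; rewrite connC.
by right.
Qed.

Definition pairs (V : finType) (R : {set {set V}}) :=
  forall e, e \in R -> exists p q, e = [set p; q].

Lemma conn_set0 (V : finType) (x y : V) : connect (edge_rel (set0 : {set {set V}})) x y -> x = y.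
Proof.
move=> H; have : pred1 x y.
  by apply: (conn_inv _ _ H) => //= u v _; rewrite /edge_rel in_set0.
by move/eqP.
Qed.

Lemma count_lemma (V : finType) n : forall (R K : {set {set V}}) (B : {set V}),
  #|R| = n -> pairs R ->
  {in B &, forall x y, x != y -> ~~ connect (edge_rel K) x y} ->
  {in B &, forall x y, connect (edge_rel (K :|: R)) x y} ->
  (#|B| <= n.+1)%N.
Proof.
elim: n => [|n IH] R K B cR pR disc conn.
  rewrite (cards0_eq cR) setU0 in conn.
  apply/card_le1_eqP => x y xB yB; apply/eqP; apply: contraTT (conn y x yB xB).
  exact: disc.
have : (0 < #|R|)%N by rewrite cR.
rewrite card_gt0 => /set0Pn [r rR].
have [p [q rpq]] := pR r rR.
set R' := R :\ r.
have cR' : #|R'| = n by move: cR; rewrite (cardsD1 r R) rR add1n => -[].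
have pR' : pairs R' by move=> e; rewrite in_setD1 => /andP [_ /pR].
have KR : K :|: [set r] :|: R' = K :|: R by rewrite -setUA setD1K.
case: (pickP [pred b in B | connect (edge_rel K) b q]) => [b /andP [bB bq]|nob].
  have le : (#|B| <= (#|B :\ b|).+1)%N by rewrite (cardsD1 b B) bB.
  apply: (leq_trans le); rewrite ltnS.
  apply: (IH R' (K :|: [set r])) => //; last first.
    by move=> x y; rewrite !in_setD1 KR => /andP [_ xB] /andP [_ yB]; apply: conn.
  move=> x y; rewrite !in_setD1 => /andP [xb xB] /andP [yb yB] xy.
  apply/negP => /conn_add2 [|[[w1 w1r cx] [w2 w2r cy]]].
    by move=> c; move: (disc x y xB yB xy); rewrite c.
  have Hq : forall z, z \in B -> z != b -> forall w, w \in r -> connect (edge_rel K) z w -> connect (edge_rel K) z p.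
    move=> z zB zb w; rewrite rpq => /set2P [->//|->] czq.
    have czb : connect (edge_rel K) z b by rewrite (connect_trans czq) // connC.
    by move: (disc z b zB bB zb); rewrite czb.
  have cxp := Hq x xB xb w1 w1r cx.
  have cyp := Hq y yB yb w2 w2r cy.
  have cxy : connect (edge_rel K) x y by rewrite (connect_trans cxp) // connC.
  by move: (disc x y xB yB xy); rewrite cxy.
apply: ltnW; rewrite ltnS.
apply: (IH R' (K :|: [set r])) => //; last first.
  by move=> x y xB yB; rewrite KR; apply: conn.
move=> x y xB yB xy.
apply/negP => /conn_add2 [|[[w1 w1r cx] [w2 w2r cy]]].
  by move=> c; move: (disc x y xB yB xy); rewrite c.
have Hq : forall z, z \in B -> forall w, w \in r -> connect (edge_rel K) z w -> connect (edge_rel K) z p.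
  move=> z zB w; rewrite rpq => /set2P [->//|->] czq.
  by move: (nob z); rewrite /= zB czq.
have cxp := Hq x xB w1 w1r cx.
have cyp := Hq y yB w2 w2r cy.
have : connect (edge_rel K) x y by rewrite (connect_trans cxp) // connC.
by apply/negP; apply: disc.
Qed.

Lemma conn_count (V : finType) (S : {set V}) (E : {set {set V}}) : pairs E ->
  {in S &, forall x y, connect (edge_rel E) x y} -> (#|S| <= #|E|.+1)%N.
Proof.
move=> pE conn.
apply: (@count_lemma V #|E| E set0 S) => //.
  by move=> x y _ _ xy; apply/negP => /conn_set0 /eqP; rewrite (negbTE xy).
by move=> x y xS yS; rewrite set0U; apply: conn.
Qed.

Lemma tree_pairs (V : finType) (S : {set V}) (F : {set {set V}}) : is_tree S F -> pairs F.
Proof. by case=> _ edg _ _ e /edg [u [v [_ _ _ ->]]]; exists u, v. Qed.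

Lemma sub_conn (V : finType) (F F' : {set {set V}}) :
  (forall u v, [set u; v] \in F -> connect (edge_rel F') u v) ->
  forall x y, connect (edge_rel F) x y -> connect (edge_rel F') x y.
Proof. by move=> H x y; apply: connect_sub => u v /H. Qed.

Lemma bridge (V : finType) (S : {set V}) (F : {set {set V}}) p q :
  is_tree S F -> [set p; q] \in F -> ~~ connect (edge_rel (F :\ [set p; q])) p q.
Proof.
move=> tr eF; have pF := tree_pairs tr; case: tr => Sn edg conn cF.
apply/negP => cpq.
have pF' : pairs (F :\ [set p; q]) by move=> e /setD1P [_ /pF].
have cS : (#|S| <= (#|F :\ [set p; q]|).+1)%N.
  apply: (@conn_count V S _ pF') => x y xS yS.
  apply: (sub_conn _ (conn x y xS yS)) => u v uvF.
  case: (eqVneq [set u; v] [set p; q]) => [E|ne]; last first.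
    by apply: connect1; rewrite /edge_rel in_setD1 ne uvF.
  by case: (set2_eq E) => [[-> ->]|[-> ->]] //; rewrite connC.
have e1 : #|F| = (#|F :\ [set p; q]|).+1 by rewrite (cardsD1 [set p; q] F) eF.
have S0 : (0 < #|S|)%N by rewrite card_gt0.
lia.
Qed.

Definition dd (R : realFieldType) (V : finType) (w : V -> V -> R) (e : {set V}) : R :=
  (\sum_(p : V * V | [set p.1; p.2] == e) w p.1 p.2) / 2%:R.
Definition wsum (R : realFieldType) (V : finType) (w : V -> V -> R) (X : {set {set V}}) : R :=
  \sum_(e in X) dd w e.

Lemma tw_wsum (R : realFieldType) (V : finType) (w : V -> V -> R) F : tree_weight w F = wsum w F.
Proof.
rewrite /tree_weight /wsum /dd.
rewrite (partition_big (fun p : V * V => [set p.1; p.2]) (mem F)) //=.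
rewrite mulr_suml; apply: eq_bigr => e eF; congr (_ / _).
apply: eq_bigl => p; case: eqP => [E|_]; [by rewrite E eF | by rewrite andbF].
Qed.

Lemma dd_pair (R : realFieldType) (V : finType) (w : V -> V -> R) x y : x != y ->
  (forall u v, w u v = w v u) -> dd w [set x; y] = w x y.
Proof.
move=> xy wsym; rewrite /dd.
rewrite (bigD1 (x, y)) //= (bigD1 (y, x)) /=; last first.
  by rewrite setUC eqxx xpair_eqE eq_sym (negbTE xy).
rewrite big1 ?addr0.
  by rewrite (wsym y x); lra.
move=> [u v] /= /andP [/andP [/eqP E n1] n2].
by case: (set2_eq E) => [[? ?]|[? ?]]; subst; rewrite eqxx in n1 n2.
Qed.

Lemma exists_min_seq (X : eqType) (R : realFieldType) (P : X -> Prop) (f : X -> R) (s : seq X) :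
  (exists2 x, x \in s & P x) ->
  exists x, [/\ x \in s, P x & forall y, y \in s -> P y -> f x <= f y].
Proof.
elim: s => [|z s IH] [x0 xs Px0]; first by [].
case: (classic (exists2 x, x \in s & P x)) => [H|H].
  have [x [xs' Px minx]] := IH H.
  case: (classic (P z)) => Pz.
    case: (leP (f x) (f z)) => h.
      exists x; split => //; first by rewrite inE xs' orbT.
      by move=> y; rewrite inE => /orP [/eqP ->|ys] Py //; apply: minx.
    exists z; split => //; first by rewrite inE eqxx.
    move=> y; rewrite inE => /orP [/eqP ->|ys] Py //.
    exact: le_trans (ltW h) (minx y ys Py).
  exists x; split => //; first by rewrite inE xs' orbT.
  by move=> y; rewrite inE => /orP [/eqP ->|ys] Py //; apply: minx.
have x0z : x0 = z.
  move: xs; rewrite inE => /orP [/eqP //|xs]; by case: H; exists x0.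
subst x0; exists z; split; [by rewrite inE eqxx | done | ].
move=> y; rewrite inE => /orP [/eqP ->|ys] Py //.
by case: H; exists y.
Qed.

Lemma stab_exch (R : realFieldType) (V : finType) (d : V -> V -> R) T gamma S F S' F' :
  is_metric d -> 1 <= gamma -> gamma_stable d T gamma S F ->
  steiner_tree T S' F' -> F' != F ->
  gamma * wsum d (F :\: F') < wsum d (F' :\: F).
Proof.
move=> met g1 [[stS minS] stab] st' neq.
rewrite ltNge; apply/negP => H.
pose w' := fun u v => if [set u; v] \in F :\: F' then gamma * d u v else d u v.
have d0 : forall u v, 0 <= d u v by move=> u v; case: (met u v u).
have rng : forall u v, d u v <= w' u v <= gamma * d u v.
  move=> u v; rewrite /w'; have := d0 u v; case: ifP => _ h; apply/andP; split; nra.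
have ddw : forall e, dd w' e = if e \in F :\: F' then gamma * dd d e else dd d e.
  move=> e; rewrite /dd.
  rewrite (eq_bigr (fun p => if e \in F :\: F' then gamma * d p.1 p.2 else d p.1 p.2)); last first.
    by move=> p /eqP E; rewrite /w' E.
  by case: ifP => _ //; rewrite -mulr_sumr mulrA.
have wF : wsum w' F = wsum d (F :&: F') + gamma * wsum d (F :\: F').
  rewrite /wsum (big_setID F') /= mulr_sumr; congr (_ + _); apply: eq_bigr => e.
    by move=> /setIP [eF eF']; rewrite ddw in_setD eF'.
  by rewrite ddw => ->.
have wF' : wsum w' F' = wsum d (F :&: F') + wsum d (F' :\: F).
  rewrite /wsum (big_setID F) /= (setIC F'); congr (_ + _); apply: eq_bigr => e.
    by move=> /setIP [eF eF']; rewrite ddw in_setD eF'.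
  by rewrite in_setD => /andP [eF eF']; rewrite ddw in_setD (negbTE eF) andbF.
have [[S0 F0] [_ st0 min0]] := @exists_min_seq _ R (fun p => steiner_tree T p.1 p.2)
  (fun p => tree_weight w' p.2) (enum (@predT ({set V} * {set {set V}})%type))
  (ex_intro2 _ _ (S, F) (mem_enum _ _) stS).
have mst0 : min_steiner_tree T w' S0 F0.
  by split => // S1 F1 st1; apply: (min0 (S1, F1)) => //; rewrite mem_enum.
have [eS eF] := stab w' rng S0 F0 mst0; subst S0 F0.
have : min_steiner_tree T w' S' F'.
  split => // S1 F1 st1.
  apply: le_trans (min0 (S1, F1) (mem_enum _ _) st1).
  by rewrite /= !tw_wsum wF wF' lerD2l.
by move/(stab w' rng) => [_ E]; rewrite E eqxx in neq.
Qed.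

Lemma edge_in (V : finType) (S : {set V}) (F : {set {set V}}) u v :
  is_tree S F -> [set u; v] \in F -> [/\ u != v, u \in S & v \in S].
Proof.
case=> _ edg _ _ /edg [x [y [xy xS yS /set2_eq [[-> ->]|[-> ->]]]]]; first by [].
by rewrite eq_sym.
Qed.

Lemma pair_at (V : finType) (S : {set V}) (F : {set {set V}}) e s :
  is_tree S F -> e \in F -> s \in e -> exists z, e = [set s; z].
Proof.
case=> _ edg _ _ /edg [x [y [_ _ _ ->]]] /set2P [->|->]; first by exists y.
by exists x; rewrite setUC.
Qed.

Lemma set2_inj (V : finType) (s t z : V) : [set s; t] = [set s; z] -> t = z.
Proof. by case/set2_eq => [[_ ->]|[-> ->]]. Qed.

Lemma conn_mono (V : finType) (K K' : {set {set V}}) x y :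
  K \subset K' -> connect (edge_rel K) x y -> connect (edge_rel K') x y.
Proof.
move=> sub; apply: sub_conn => u v uvK; apply: connect1.
by rewrite /edge_rel (subsetP sub).
Qed.

Lemma exch_tree (V : finType) (S : {set V}) (F : {set {set V}}) x y p q :
  is_tree S F -> [set x; y] \in F -> [set p; q] \notin F -> p \in S -> q \in S -> p != q ->
  connect (edge_rel ([set p; q] |: (F :\ [set x; y]))) x y ->
  is_tree S ([set p; q] |: (F :\ [set x; y])).
Proof.
move=> tr eF nF pS qS pq cxy; have tr' := tr; case: tr' => Sn edg conn cF.
split => //.
- move=> e; rewrite in_setU1 => /orP [/eqP ->|/setD1P [_ /edg] //].
  by exists p, q.
- move=> u v uS vS; apply: (sub_conn _ (conn u v uS vS)) => u' v' e'.
  case: (eqVneq [set u'; v'] [set x; y]) => [/set2_eq [[-> ->]|[-> ->]] //|ne].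
    by rewrite connC.
  by apply: connect1; rewrite /edge_rel in_setU1 in_setD1 ne e' orbT.
- rewrite cardsU1 in_setD1 (negbTE nF) andbF /= -cF (cardsD1 [set x; y] F) eF.
  by rewrite add1n.
Qed.

Lemma diff1 (V : finType) (F : {set {set V}}) e e' :
  e \in F -> e' \notin F -> F :\: (e' |: (F :\ e)) = [set e].
Proof.
move=> eF nF; apply/setP => f; rewrite !inE.
have ee' : e != e' by apply: contraNneq nF => <-.
case: (eqVneq f e) => [->|fe] /=; first by rewrite eF (negbTE ee').
by case: (f \in F); rewrite ?orbT ?andbF.
Qed.

Lemma diff2 (V : finType) (F : {set {set V}}) e e' :
  e \in F -> e' \notin F -> (e' |: (F :\ e)) :\: F = [set e'].
Proof.
move=> eF nF; apply/setP => f; rewrite !inE.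
case: (eqVneq f e') => [->|fe] /=; first by rewrite (negbTE nF).
by case: (f \in F); rewrite ?andbF.
Qed.

Lemma wsum1 (R : realFieldType) (V : finType) (w : V -> V -> R) e : wsum w [set e] = dd w e.
Proof. by rewrite /wsum big_set1. Qed.

Lemma met_facts (R : realFieldType) (V : finType) (d : V -> V -> R) :
  is_metric d ->
  [/\ forall x y, 0 <= d x y, forall x y, x != y -> 0 < d x y,
      forall x y, d x y = d y x & forall x y z, d x z <= d x y + d y z].
Proof.
move=> met; split.
- by move=> x y; case: (met x y x).
- move=> x y xy; case: (met x y x) => h0 [h1 _] _ _; rewrite lt_def h0 andbT.
  by apply/eqP => /h1 E; rewrite E eqxx in xy.
- by move=> x y; case: (met x y x).
- by move=> x y z; case: (met x y z).
Qed.

Lemma exch_stab (R : realFieldType) (V : finType) (d : V -> V -> R) T gamma S F x y p q :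
  is_metric d -> 1 <= gamma -> gamma_stable d T gamma S F ->
  [set x; y] \in F -> [set p; q] \notin F -> p \in S -> q \in S -> p != q ->
  connect (edge_rel ([set p; q] |: (F :\ [set x; y]))) x y ->
  gamma * d x y < d p q.
Proof.
move=> met g1 stab eF nF pS qS pq cxy.
have [[[tr TS] _] _] := stab.
have tr' := exch_tree tr eF nF pS qS pq cxy.
have neq : [set p; q] |: (F :\ [set x; y]) != F.
  by apply/eqP => E; move: nF; rewrite -E setU11.
have := stab_exch met g1 stab (conj tr' TS) neq.
have [_ _ dsym _] := met_facts met.
have [xy _ _] := edge_in tr eF.
by rewrite diff1 // diff2 // !wsum1 !dd_pair.
Qed.

Lemma conn_map (V : finType) (F F' : {set {set V}}) (f : V -> V) u v :
  (forall x y, [set x; y] \in F -> connect (edge_rel F') (f x) (f y)) ->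
  connect (edge_rel F) u v -> connect (edge_rel F') (f u) (f v).
Proof.
move=> H cuv.
pose P : pred V := [pred z | connect (edge_rel F') (f u) (f z)].
have : P v by apply: (conn_inv _ _ cuv) => [|x y Px /H]; [exact: connect0 | exact: connect_trans].
by [].
Qed.

Lemma wsum2 (R : realFieldType) (V : finType) (w : V -> V -> R) e1 e2 : e1 != e2 ->
  wsum w [set e1; e2] = dd w e1 + dd w e2.
Proof. by move=> ne; rewrite /wsum big_setU1 ?big_set1 // in_set1. Qed.

Lemma deg2_contra (R : realFieldType) (V : finType) (d : V -> V -> R) T gamma S F s t t' :
  is_metric d -> 1 <= gamma -> gamma_stable d T gamma S F ->
  [set s; t] \in F -> [set s; t'] \in F -> t != t' -> s \notin T ->
  (forall z, [set s; z] \in F -> z = t \/ z = t') -> False.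
Proof.
move=> met g1 stab e1F e2F tt' sT deg.
have [[[tr TS] _] _] := stab.
have [st sS tS] := edge_in tr e1F.
have [st' _ t'S] := edge_in tr e2F.
set a1 := [set s; t]; set a2 := [set s; t']; set n := [set t; t'].
have a12 : a1 != a2 by apply/eqP => /set2_inj E; rewrite E eqxx in tt'.
have a1n : a1 != n.
  by apply/eqP => /set2_eq [[? ?]|[? ?]]; subst; rewrite ?eqxx in st st' tt'.
have a2n : a2 != n.
  by apply/eqP => /set2_eq [[? ?]|[? ?]]; subst; rewrite ?eqxx in st st' tt'.
have nF : n \notin F.
  apply/negP => nF.
  move: (bridge tr e1F) => /negP; apply.
  apply: (@connect_trans _ _ t').
    by apply: connect1; rewrite /edge_rel in_setD1 e2F eq_sym a12.
  by apply: connect1; rewrite /edge_rel setUC in_setD1 nF eq_sym a1n.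
set F1 := (F :\ a1) :\ a2.
set F'' := n |: F1.
have noS : forall e, e \in F1 -> s \notin e.
  move=> e; rewrite !in_setD1 => /andP [ea2 /andP [ea1 eF]]; apply/negP => se.
  have [z Ez] := pair_at tr eF se.
  have zF : [set s; z] \in F by rewrite -Ez.
  by case: (deg z zF) => E; subst z; [move: ea1 | move: ea2]; rewrite Ez eqxx.
have tr'' : is_tree (S :\ s) F''.
  have [Sn edg conn cF] := tr.
  split.
  - by apply/set0Pn; exists t; rewrite in_setD1 eq_sym st tS.
  - move=> e; rewrite in_setU1 => /orP [/eqP ->|eF1].
      by exists t, t'; split => //; rewrite in_setD1 ?tS ?t'S andbT eq_sym.
    have := noS e eF1; move: eF1; rewrite !in_setD1 => /andP [_ /andP [_ /edg [x [y [xy xS yS Ee]]]]].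
    rewrite Ee !inE negb_or => /andP [sx sy].
    by exists x, y; split => //; rewrite in_setD1 ?xS ?yS andbT eq_sym.
  - move=> u v; rewrite !in_setD1 => /andP [us uS] /andP [vs vS].
    pose f := fun z => if z == s then t else z.
    have fu : f u = u by rewrite /f (negbTE us).
    have fv : f v = v by rewrite /f (negbTE vs).
    rewrite -fu -fv; apply: (conn_map _ (conn u v uS vS)) => x y xyF.
    have ts : (t == s) = false by apply/negbTE; rewrite eq_sym.
    have t's : (t' == s) = false by apply/negbTE; rewrite eq_sym.
    have ctt' : connect (edge_rel F'') t t' by apply: connect1; rewrite /edge_rel setU11.
    case: (eqVneq x s) => [xs|xs].
      subst x; case: (deg y xyF) => ->; rewrite /f eqxx ?ts ?t's //.
    case: (eqVneq y s) => [ys|ys].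
      subst y; rewrite setUC in xyF; case: (deg x xyF) => ->; rewrite /f eqxx ?ts ?t's //.
      by rewrite connC.
    rewrite /f (negbTE xs) (negbTE ys); apply: connect1.
    rewrite /edge_rel in_setU1 !in_setD1 xyF !andbT; apply/orP; right.
    apply/andP; split; apply/eqP => /set2_eq [[E _]|[_ E]]; by rewrite E eqxx in xs ys.
  - have nF1 : n \notin F1 by rewrite /F1 !in_setD1 (negbTE nF) !andbF.
    rewrite cardsU1 nF1 add1n /F1.
    have cS := cardsD1 s S; rewrite sS add1n in cS.
    have c1 := cardsD1 a1 F; rewrite e1F add1n in c1.
    have c2 := cardsD1 a2 (F :\ a1); rewrite in_setD1 eq_sym a12 e2F add1n in c2.
    by move: cF; rewrite c1 c2 cS subSS subn0 => <-; rewrite subSS subn0.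
have st'' : steiner_tree T (S :\ s) F''.
  split => //; apply/subsetP => x xT; rewrite in_setD1 (subsetP TS) // andbT.
  by apply: contraNneq sT => <-.
have neq : F'' != F by apply/eqP => E; move: nF; rewrite -E setU11.
have := stab_exch met g1 stab st'' neq.
have dF : F :\: F'' = [set a1; a2].
  apply/setP => f; rewrite !inE.
  case: (eqVneq f a1) => [->|f1] /=; first by rewrite (negbTE a1n) andbF e1F.
  case: (eqVneq f a2) => [->|f2] /=; first by rewrite (negbTE a2n) ?eqxx /= ?andbF e2F.
  by case: (f \in F); rewrite ?orbT ?andbF.
have dF' : F'' :\: F = [set n].
  apply/setP => f; rewrite !inE.
  case: (eqVneq f n) => [->|fn] /=; first by rewrite (negbTE nF).
  by case: (f \in F); rewrite ?andbF.
have [d0 _ dsym dtri] := met_facts met.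
rewrite dF dF' wsum2 // wsum1 /a1 /a2 /n !dd_pair // => H.
have := dtri t s t'; rewrite (dsym t s) => h.
have g0 : 0 <= gamma - 1 by rewrite subr_ge0.
have := mulr_ge0 g0 (addr_ge0 (d0 s t) (d0 s t')).
nra.
Qed.

Lemma nb_disc (V : finType) (S : {set V}) (F : {set {set V}}) SH FH s x y :
  is_tree S F -> is_subgraph SH FH S F -> s \notin SH ->
  [set s; x] \in F -> [set s; y] \in F -> x != y -> ~~ connect (edge_rel FH) x y.
Proof.
move=> tr [_ FHF FHv] sSH ex ey xy; apply/negP => cxy.
have sub : FH \subset F :\ [set s; x].
  apply/subsetP => e eFH; rewrite in_setD1 (subsetP FHF) // andbT.
  apply/eqP => E; rewrite E in eFH; have [sS _] := FHv _ _ eFH.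
  by rewrite sS in sSH.
move: (bridge tr ex) => /negP; apply.
apply: (@connect_trans _ _ y).
  apply: connect1; rewrite /edge_rel in_setD1 ey andbT.
  by apply/eqP => /set2_inj E; rewrite E eqxx in xy.
by rewrite connC; exact: conn_mono sub cxy.
Qed.

Lemma fan3 (R : realFieldType) (V : finType) (d : V -> V -> R) T S F SH FH (A : R) s t t' z :
  is_tree S F -> is_subgraph SH FH S F ->
  (forall (a' : V) (m' : nat) (b' : 'I_m' -> V),
     tc_fan T SH FH a' b' -> A <= avg_weight d a' b') ->
  s \notin T -> s \notin SH -> t \in T -> t' \in T -> z \in T ->
  [set s; t] \in F -> [set s; t'] \in F -> [set s; z] \in F ->
  t != t' -> t != z -> t' != z ->
  2%:R * A <= d s t + d s t' + d s z.
Proof.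
move=> tr sub hii sT sSH tT t'T zT et et' ez tt' tz t'z.
have [st _ _] := edge_in tr et.
have [st' _ _] := edge_in tr et'.
have [sz _ _] := edge_in tr ez.
pose b3 := fun k : 'I_3 => nth s [:: t; t'; z] k.
have fan : tc_fan T SH FH s b3.
  split => //.
  - by move=> [[|[|[|k]]] Hk] //=; rewrite eq_sym.
  - by move=> [[|[|[|k]]] Hk] //=; left.
  - have D := nb_disc tr sub sSH.
    move=> [[|[|[|k]]] Hk] [[|[|[|l]]] Hl] //= kl; rewrite /same_terminal_comp.
    + exact: D.
    + exact: D.
    + by apply: D; rewrite // eq_sym.
    + exact: D.
    + by apply: D; rewrite // eq_sym.
    + by apply: D; rewrite // eq_sym.
have := hii s 3 b3 fan.
rewrite /avg_weight !big_ord_recr big_ord0 /= add0r ler_pdivlMr ?ltr0Sn //.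
by rewrite mulrC.
Qed.

Lemma arith1 (R : realFieldType) (g A X Y Z: R) : 1755%:R / 1000%:R < g -> 0 < A ->
  g * X < A -> g * Y < A -> g * Z < X + Z -> 2%:R * A <= X + Y + Z ->
  0 <= X -> 0 <= Y -> 0 <= Z -> False.
Proof. move=> *; nra. Qed.

Lemma light_edge (R : realFieldType) (V : finType) (d : V -> V -> R) T gamma S F SH FH (A : R) e :
  is_metric d -> 1755%:R / 1000%:R < gamma -> gamma_stable d T gamma S F ->
  (forall u v, [set u; v] \in F -> u \in T \/ v \in T) ->
  is_subgraph SH FH S F ->
  (forall u v, u != v -> [set u; v] \notin FH ->
     in_terminal_comp T SH u -> in_terminal_comp T SH v ->
     ~~ same_terminal_comp FH u v -> A < d u v) ->
  (forall (a' : V) (m' : nat) (b' : 'I_m' -> V),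
     tc_fan T SH FH a' b' -> A <= avg_weight d a' b') ->
  0 < A ->
  e \in F -> e \notin FH -> dd d e < A / gamma ->
  exists s t, [/\ e = [set s; t], s \notin T, s \notin SH &
     forall e', e' \in F -> e' \notin FH -> dd d e' < A / gamma -> s \in e' -> e' = e].
Proof.
move=> met gam stab adj sub hi hii A0 eF eFH light.
have [[[tr TS] _] _] := stab.
have [d0 dpos dsym dtri] := met_facts met.
have g1 : 1 <= gamma by lra.
have g0 : 0 < gamma by lra.
have key : forall s t, e = [set s; t] -> s \notin T -> s \notin SH ->
    forall e', e' \in F -> e' \notin FH -> dd d e' < A / gamma -> s \in e' -> e' = e.
  move=> s t Ee sT sSH e' e'F e'FH e'l se'.
  have [t' Ee'] := pair_at tr e'F se'.
  have et : [set s; t] \in F by rewrite -Ee.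
  have et' : [set s; t'] \in F by rewrite -Ee'.
  have [st sS tS] := edge_in tr et.
  have [st' _ t'S] := edge_in tr et'.
  case: (eqVneq t' t) => [Et|t't]; first by rewrite Ee' Ee Et.
  exfalso.
  have tT : t \in T by case: (adj _ _ et) => // h; rewrite h in sT.
  have t'T : t' \in T by case: (adj _ _ et') => // h; rewrite h in sT.
  have X : gamma * d s t < A.
    by move: light; rewrite Ee dd_pair // ltr_pdivlMr // mulrC.
  have Y : gamma * d s t' < A.
    by move: e'l; rewrite Ee' dd_pair // ltr_pdivlMr // mulrC.
  case: (classic (exists z, [/\ [set s; z] \in F, z != t & z != t'])) => [[z [ez zt zt']]|nz].
    have [sz _ zS] := edge_in tr ez.
    have zT : z \in T by case: (adj _ _ ez) => // h; rewrite h in sT.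
    have tz : t != z by rewrite eq_sym.
    have ne1 : [set s; t] != [set s; z] by apply/eqP => /set2_inj E; rewrite E eqxx in tz.
    have ntz : [set t; z] \notin F.
      apply/negP => ntz.
      move: (bridge tr ez) => /negP; apply.
      apply: (@connect_trans _ _ t).
        by apply: connect1; rewrite /edge_rel in_setD1 et ne1.
      apply: connect1; rewrite /edge_rel in_setD1 ntz andbT.
      by apply/eqP => /set2_eq [[E _]|[E _]]; [rewrite E eqxx in st | rewrite E eqxx in tz].
    have Z : gamma * d s z < d t z.
      apply: (exch_stab met g1 stab ez ntz tS zS tz).
      apply: (@connect_trans _ _ t).
        by apply: connect1; rewrite /edge_rel in_setU1 in_setD1 et ne1 orbT.
      by apply: connect1; rewrite /edge_rel setU11.
    have := dtri t s z; rewrite (dsym t s) => tri.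
    have Z' : gamma * d s z < d s t + d s z by apply: lt_le_trans Z tri.
    have t't' : t != t' by rewrite eq_sym.
    have t'z : t' != z by rewrite eq_sym.
    have f3 := fan3 tr sub hii sT sSH tT t'T zT et et' ez t't' tz t'z.
    exact: (arith1 gam A0 X Y Z' f3 (d0 s t) (d0 s t') (d0 s z)).
  apply: (deg2_contra met g1 stab et et' _ sT).
    by rewrite eq_sym.
  move=> z ez; case: (eqVneq z t) => [->|zt]; first by left.
  case: (eqVneq z t') => [->|zt']; first by right.
  by case: nz; exists z.
have [[_ edg _ _] _] := (tr, tt).
have [x [y [xy xS yS Ee]]] := edg e eF.
have exy : [set x; y] \in F by rewrite -Ee.
have dxy : gamma * d x y < A.
  by move: light; rewrite Ee dd_pair // ltr_pdivlMr // mulrC.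
case: (boolP ((x \in SH) || (x \in T))) => hx.
  case: (boolP ((y \in SH) || (y \in T))) => hy.
    exfalso.
    have nsame : ~~ same_terminal_comp FH x y.
      apply/negP => cxy; move: (bridge tr exy) => /negP; apply.
      apply: conn_mono cxy; apply/subsetP => f fFH.
      case: sub => _ FHF _; rewrite in_setD1 (subsetP FHF) // andbT.
      by apply/eqP => E; rewrite Ee -E fFH in eFH.
    have nFH : [set x; y] \notin FH by rewrite -Ee.
    have := hi x y xy nFH (orP hx) (orP hy) nsame.
    have := d0 x y; nra.
  move: hy; rewrite negb_or => /andP [ySH yT].
  exists y, x; split => //; first by rewrite Ee setUC.
  by apply: (key y x) => //; rewrite Ee setUC.
move: hx; rewrite negb_or => /andP [xSH xT].
exists x, y; split => //.
by apply: (key x y).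
Qed.
Lemma arith2 (R : realFieldType) (g r D Dj U : R) : 1755%:R / 1000%:R < g -> r * (g - 1) = 1 ->
  0 < D -> D <= r * Dj -> Dj <= U -> g * U < D -> False.
Proof.
move=> g1 rg D0 h1 h2 h3.
have r0 : 0 < r by nra.
have h4 : D <= r * U by nra.
have h5 : (g - 1) * D <= U by nra.
have h6 : g * ((g - 1) * D) <= g * U by rewrite ler_pM2l; nra.
have h7 : g * (g - 1) < 1 by nra.
nra.
Qed.
Lemma arith3 (R : realFieldType) (g r M S D U : R) : 1755%:R / 1000%:R < g -> r * (g - 1) = 1 ->
  2%:R <= M -> 0 < S -> 0 < D -> g * U < D -> M * D <= r * S -> S * M <= (S + U) * (M - 1) -> False.
Proof.
move=> g1 rg M2 S0 D0 h1 h2 h3.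
have r0 : 0 < r by nra.
have h4 : (g - 1) * (M * D) <= S by nra.
have h5 : S <= U * (M - 1) by nra.
have h6 : g * (U * (M - 1)) < D * (M - 1) by nra.
have h7 : g * ((g - 1) * (M * D)) < D * (M - 1) by nra.
have h8 : g * (g - 1) < 1.
  have h9 : (g * (g - 1)) * (M * D) < 1 * (M * D) by nra.
  by rewrite ltr_pM2r in h9; nra.
nra.
Qed.

Lemma neigh (V : finType) (S : {set V}) (F : {set {set V}}) a x :
  is_tree S F -> a \in S -> x \in S -> x != a ->
  exists u, [set a; u] \in F /\ connect (edge_rel [set e in F | a \notin e]) x u.
Proof.
move=> tr aS xS xa; have [_ _ conn _] := tr.
set Fa := [set e in F | a \notin e].
have na : ~~ connect (edge_rel Fa) x a.
  apply/negP => c.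
  have : [pred z | z != a] a.
    apply: (conn_inv _ _ c) => //= u v ua; rewrite /edge_rel inE => /andP [_].
    by rewrite !inE negb_or => /andP [_ av]; rewrite eq_sym.
  by rewrite /= eqxx.
have [p [q [epq Pp nPq]]] := conn_cross (P := connect (edge_rel Fa) x) (conn x a xS aS) (connect0 _ _) na.
have : a \in [set p; q].
  apply/negPn/negP => anp; move: nPq; rewrite (connect_trans Pp) //.
  by apply: connect1; rewrite /edge_rel inE anp andbT; exact: epq.
case/set2P => E; subst a; first by rewrite Pp in na.
by exists p; rewrite setUC.
Qed.

Lemma caseIn (R : realFieldType) (V : finType) (d : V -> V -> R) T gamma S F SH FH a m (b : 'I_m -> V) :
  is_metric d -> 1755%:R / 1000%:R < gamma -> gamma_stable d T gamma S F ->
  (forall u v, [set u; v] \in F -> u \in T \/ v \in T) ->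
  is_subgraph SH FH S F -> tc_fan T SH FH a b ->
  (forall (a' : V) (m' : nat) (b' : 'I_m' -> V),
     tc_fan T SH FH a' b' -> avg_weight d a b <= avg_weight d a' b') ->
  (forall i j, d a (b i) <= (gamma - 1)^-1 * d a (b j)) ->
  a \in S -> forall i, [set a; b i] \in F.
Proof.
move=> met gam stab adj sub fan hii hiii aS i.
have [[[tr TS] _] _] := stab.
have [d0 dpos dsym dtri] := met_facts met.
have g1 : 1 <= gamma by lra.
have rg : (gamma - 1)^-1 * (gamma - 1) = 1 by rewrite mulVf //; apply/eqP => h; lra.
have fan0 := fan; case: fan0 => m2 aT bna bel bdist.
have [SHS _ _] := sub.
have bS : forall j, b j \in S.
  by move=> j; case: (bel j) => [/(subsetP TS)//|[/(subsetP SHS)]].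
case: (boolP ([set a; b i] \in F)) => // nF; exfalso.
have bia : b i != a := bna i.
have [u [eu cu]] := neigh tr aS (bS i) bia.
have [au _ uS] := edge_in tr eu.
have uT : u \in T by case: (adj _ _ eu) => // h; rewrite h in aT.
have ua : u != a by rewrite eq_sym.
have Hu : gamma * d a u < d a (b i).
  apply: (exch_stab met g1 stab eu nF aS (bS i)); first by rewrite eq_sym.
  apply: (@connect_trans _ _ (b i)); first by apply: connect1; rewrite /edge_rel setU11.
  apply: conn_mono cu; apply/subsetP => e; rewrite inE => /andP [eF ae].
  rewrite in_setU1 in_setD1 eF andbT; apply/orP; right.
  by apply: contraNneq ae => ->; rewrite set21.
have Di : 0 < d a (b i) by apply: dpos; rewrite eq_sym.
have m1 : (0 < m.-1)%N by case: m m2 {b fan hii hiii i bna bel bdist bS nF bia cu Hu Di} => [|[|m]].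
have m1R : ((m.-1)%:R : R) = m%:R - 1 by rewrite -subn1 natrB //; apply: leq_trans m2.
have mR : (2%:R : R) <= m%:R by rewrite ler_nat.
set Sig := \sum_(k < m) d a (b k).
case: (boolP [exists j, connect (edge_rel FH) u (b j)]) => [/existsP [j cuj]|noj].
  pose b' := fun k => if k == j then u else b k.
  have fan' : tc_fan T SH FH a b'.
    split => //.
    - by move=> k; rewrite /b'; case: ifP.
    - by move=> k; rewrite /b'; case: ifP => _; [left|].
    - move=> k l kl; rewrite /b' /same_terminal_comp.
      case: (eqVneq k j) => [kj|kj]; case: (eqVneq l j) => [lj|lj].
      + by rewrite kj lj eqxx in kl.
      + apply/negP => c; have := bdist j l; rewrite eq_sym lj => /(_ isT) /negP; apply.
        by rewrite /same_terminal_comp (connect_trans _ c) // connC.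
      + apply/negP => c; have := bdist k j kj => /negP; apply.
        by rewrite /same_terminal_comp (connect_trans c) // connC.
      + exact: bdist.
  have := hii a m b' fan'.
  rewrite /avg_weight (bigD1 j) //= (bigD1 j (P := predT)) //= /b' eqxx.
  have E : \sum_(k < m | k != j) d a (if k == j then u else b k) = \sum_(k < m | k != j) d a (b k).
    by apply: eq_bigr => k /negbTE ->.
  rewrite E.
  rewrite ler_pM2r; last by rewrite invr_gt0 ltr0n.
  rewrite lerD2r => hj.
  exact: (arith2 gam rg Di (hiii i j) hj Hu).
pose b'' := fun k : 'I_m.+1 => if unlift ord_max k is Some k' then b k' else u.
have b''l : forall k : 'I_m, b'' (lift ord_max k) = b k by move=> k; rewrite /b'' liftK.
have b''m : b'' ord_max = u by rewrite /b'' unlift_none.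
have nc : forall k, ~~ connect (edge_rel FH) u (b k).
  by move=> k; apply/negP => c; move: noj; rewrite negb_exists => /forallP /(_ k); rewrite c.
have fan'' : tc_fan T SH FH a b''.
  split => //.
  - by apply: leqW.
  - by move=> k; case: (unliftP ord_max k) => [k'|] ->; rewrite ?b''l ?b''m.
  - by move=> k; case: (unliftP ord_max k) => [k'|] ->; rewrite ?b''l ?b''m //; left.
  - move=> k l; case: (unliftP ord_max k) => [k'|] ->; case: (unliftP ord_max l) => [l'|] ->;
      rewrite ?b''l ?b''m /same_terminal_comp ?eqxx //.
    + by rewrite (inj_eq lift_inj); apply: bdist.
    + by rewrite connC (nc k').
have := hii a m.+1 b'' fan''.
rewrite /avg_weight big_ord_recr /= b''m.
have wl : forall k : 'I_m, widen_ord (leqnSn m) k = lift ord_max k.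
  by move=> k; apply: val_inj; rewrite /= /bump leqNgt ltn_ord.
have E : \sum_(k < m) d a (b'' (widen_ord (leqnSn m) k)) = Sig.
  by apply: eq_bigr => k _; rewrite wl b''l.
rewrite E.
rewrite -/Sig m1R => h.
have Sig0 : 0 < Sig.
  rewrite /Sig (bigD1 i) //=; apply: ltr_wpDr => //.
  by apply: sumr_ge0 => k _.
have h3 : Sig * m%:R <= (Sig + d a u) * (m%:R - 1).
  have M1 : 0 < (m%:R : R) - 1 by lra.
  have M0 : 0 < (m%:R : R) by lra.
  by move: h; rewrite ler_pdivrMr // mulrAC ler_pdivlMr.
have h2 : m%:R * d a (b i) <= (gamma - 1)^-1 * Sig.
  have E2 : \sum_(k < m) d a (b i) = m%:R * d a (b i) by rewrite sumr_const card_ord mulr_natl.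
  rewrite -E2 /Sig mulr_sumr.
  by apply: ler_sum => k _; apply: hiii.
exact: (arith3 gam rg mR Sig0 Di Hu h2 h3).
Qed.

Lemma priv_conn (V : finType) n : forall (K L : {set {set V}}) x y, #|L| = n ->
  (forall e, e \in L -> exists s t, [/\ e = [set s; t], s != x, s != y &
      forall e', e' \in K :|: L -> s \in e' -> e' = e]) ->
  connect (edge_rel (K :|: L)) x y -> connect (edge_rel K) x y.
Proof.
elim: n => [|n IH] K L x y cL hL c.
  by move: c; rewrite (cards0_eq cL) setU0.
have : (0 < #|L|)%N by rewrite cL.
rewrite card_gt0 => /set0Pn [e eL].
have [s [t [Ee sx sy priv]]] := hL e eL.
set L' := L :\ e.
have cL' : #|L'| = n by move: cL; rewrite (cardsD1 e L) eL add1n => -[].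
have sub' : K :|: L' \subset K :|: L.
  by apply/subsetP => f; rewrite !inE => /orP [->|/andP [_ ->]]; rewrite ?orbT.
have hL' : forall e, e \in L' -> exists s t, [/\ e = [set s; t], s != x, s != y &
      forall e', e' \in K :|: L' -> s \in e' -> e' = e].
  move=> e1; rewrite in_setD1 => /andP [_ e1L].
  have [s1 [t1 [E1 s1x s1y p1]]] := hL e1 e1L.
  exists s1, t1; split => // e' e'KL; apply: p1; exact: (subsetP sub').
apply: (IH K L' x y cL' hL').
case: (boolP (e \in K)) => eK.
  have -> : K :|: L' = K :|: L.
    apply/setP => f; rewrite !inE; case: (eqVneq f e) => [->|fe]; first by rewrite eK.
    by [].
  exact: c.
have KL : K :|: L = (K :|: L') :|: [set e].
  apply/setP => f; rewrite !inE; case: (eqVneq f e) => [->|fe]; first by rewrite eL !orbT.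
  by rewrite orbF.
rewrite KL in c.
case: (conn_add2 c) => // [[[w1 w1e cx] [w2 w2e cy]]].
have eKL' : e \notin K :|: L' by rewrite !inE eqxx (negbTE eK).
have iso : forall z, z != s -> ~~ connect (edge_rel (K :|: L')) z s.
  move=> z zs; apply/negP => cz.
  have : [pred w | w != s] s.
    apply: (conn_inv _ _ cz) => //= u v us uv; apply/negP => /eqP vs; subst v.
    have := priv _ (subsetP sub' _ uv); rewrite set22 => /(_ isT) E.
    by rewrite /edge_rel E (negbTE eKL') in uv.
  by rewrite /= eqxx.
have wt : forall w z, w \in e -> z != s -> connect (edge_rel (K :|: L')) z w ->
    connect (edge_rel (K :|: L')) z t.
  move=> w z; rewrite Ee => /set2P [->|->] zs cz; last by [].
  by move: (iso z zs); rewrite cz.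
have xs : x != s by rewrite eq_sym.
have ys : y != s by rewrite eq_sym.
have cxt := wt w1 x w1e xs cx.
have cyt := wt w2 y w2e ys cy.
by rewrite (connect_trans cxt) // connC.
Qed.

Lemma nat_arith (nR nK nF nF' nS' nS m : nat) : nR = (nF - nK)%N -> (nK <= nF)%N ->
  (m <= nR.+1)%N -> (nS' <= nF'.+1)%N -> nF' = (nK + m)%N -> nS' = nS.+1 ->
  nF = (nS - 1)%N -> (0 < nS)%N -> nR.+1 = m /\ nF' = (nS' - 1)%N.
Proof. lia. Qed.

Lemma caseOut (R : realFieldType) (V : finType) (d : V -> V -> R) T gamma S F SH FH a m (b : 'I_m -> V) :
  is_metric d -> 1755%:R / 1000%:R < gamma -> gamma_stable d T gamma S F ->
  (forall u v, [set u; v] \in F -> u \in T \/ v \in T) ->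
  is_subgraph SH FH S F -> tc_fan T SH FH a b ->
  (forall u v, u != v -> [set u; v] \notin FH ->
     in_terminal_comp T SH u -> in_terminal_comp T SH v ->
     ~~ same_terminal_comp FH u v -> avg_weight d a b < d u v) ->
  (forall (a' : V) (m' : nat) (b' : 'I_m' -> V),
     tc_fan T SH FH a' b' -> avg_weight d a b <= avg_weight d a' b') ->
  a \notin S -> False.
Proof.
move=> met gam stab adj sub fanH hi hii aS.
have [[[tr TS] _] _] := stab.
have [d0 dpos dsym dtri] := met_facts met.
have g1 : 1 <= gamma by lra.
have g0 : 0 < gamma by lra.
have fan0 := fanH; case: fan0 => m2 aT bna bel bdist.
have [SHS FHF FHv] := sub.
have bS : forall j, b j \in S.
  by move=> j; case: (bel j) => [/(subsetP TS)//|[/(subsetP SHS)]].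
pose i0 : 'I_m := Ordinal (leq_trans (isT : (0 < 2)%N) m2).
set Sig := \sum_(k < m) d a (b k).
set A := avg_weight d a b.
have m1 : (0 < m.-1)%N by rewrite -subn1 subn_gt0.
have N0 : 0 < ((m.-1)%:R : R) by rewrite ltr0n.
have Di0 : 0 < d a (b i0) by apply: dpos; rewrite eq_sym bna.
have Sig0 : 0 < Sig.
  rewrite /Sig (bigD1 i0) //=; apply: ltr_wpDr => //.
  by apply: sumr_ge0 => k _.
have A0 : 0 < A by rewrite /A /avg_weight -/Sig divr_gt0.
set c := A / gamma.
set Light := [set e in F | (e \notin FH) && (dd d e < c)].
set G0 := FH :|: Light.
have LE : forall e, e \in Light -> exists s t, [/\ e = [set s; t], s \notin T, s \notin SH &
     forall e', e' \in F -> e' \notin FH -> dd d e' < A / gamma -> s \in e' -> e' = e].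
  move=> e; rewrite inE => /andP [eF /andP [eFH el]].
  exact: (light_edge met gam stab adj sub hi hii A0 eF eFH el).
have G0F : G0 \subset F.
  apply/subsetP => e; rewrite inE => /orP [/(subsetP FHF)//|].
  by rewrite inE => /andP [].
have G0disc : forall i j, i != j -> ~~ connect (edge_rel G0) (b i) (b j).
  move=> i j ij; apply/negP => cij; move: (bdist i j ij); rewrite /same_terminal_comp.
  move/negP; apply.
  apply: (@priv_conn V #|Light| FH Light _ _ erefl _ cij).
  move=> e eL; have [s [t [Ee sT sSH un]]] := LE e eL.
  have nb : forall k, s != b k.
    move=> k; apply/eqP => E; case: (bel k) => [bT|[bSH _]].
      by rewrite E bT in sT.
    by rewrite E bSH in sSH.
  exists s, t; split => //.
  move=> e'; rewrite inE => /orP [e'FH|e'L] se'.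
    have e'F := subsetP FHF _ e'FH.
    have [z Ez] := pair_at tr e'F se'.
    rewrite Ez in e'FH; have [sSH' _] := FHv _ _ e'FH.
    by rewrite sSH' in sSH.
  move: e'L; rewrite inE => /andP [e'F /andP [e'FH e'l]].
  exact: un.
pose P := fun K : {set {set V}} => [&& G0 \subset K, K \subset F &
   [forall i, forall j, (i != j) ==> ~~ connect (edge_rel K) (b i) (b j)]].
have PG0 : P G0.
  rewrite /P subxx G0F /=; apply/forallP => i; apply/forallP => j; apply/implyP.
  exact: G0disc.
case: (arg_maxnP (fun K : {set {set V}} => #|K|) PG0) => K PK maxK.
move: PK; rewrite /P => /and3P [G0K KF /forallP Kdisc'].
have Kdisc : forall i j, i != j -> ~~ connect (edge_rel K) (b i) (b j).
  by move=> i j; move: (Kdisc' i) => /forallP /(_ j) /implyP.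
have Kconn : forall v, v \in S -> exists i, connect (edge_rel K) v (b i).
  move=> v vS; case: (boolP [exists i, connect (edge_rel K) v (b i)]) => [/existsP //|nov].
  exfalso.
  have nv : forall i, ~~ connect (edge_rel K) v (b i).
    by move=> i; apply/negP => c0; move: nov; rewrite negb_exists => /forallP /(_ i); rewrite c0.
  have [_ _ conn _] := tr.
  have [p [q [epq Pp nPq]]] := conn_cross (P := connect (edge_rel K) v)
     (conn v (b i0) vS (bS i0)) (connect0 _ _) (nv i0).
  set e := [set p; q].
  have eK : e \notin K.
    by apply/negP => eK; move: nPq; rewrite (connect_trans Pp) //; apply: connect1.
  have PK' : P (e |: K).
    rewrite /P; apply/and3P; split.
    - exact: subset_trans G0K (subsetU1 e K).
    - by apply/subsetP => f; rewrite in_setU1 => /orP [/eqP ->|/(subsetP KF)].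
    - apply/forallP => i; apply/forallP => j; apply/implyP => ij.
      apply/negP; rewrite setUC => /conn_add2 [cij|[[w1 w1e c1] [w2 w2e c2]]].
        by move: (Kdisc i j ij); rewrite cij.
      have np : forall k w, w \in e -> connect (edge_rel K) (b k) w -> w = q.
        move=> k w /set2P [->|->] // ck; exfalso; move: (nv k).
        by rewrite (connect_trans Pp) // connC.
      have E1 := np i w1 w1e c1; have E2 := np j w2 w2e c2.
      subst w1 w2.
      have cij : connect (edge_rel K) (b i) (b j) by rewrite (connect_trans c1) // connC.
      by move: (Kdisc i j ij); rewrite cij.
  by have := maxK _ PK'; rewrite /= cardsU1 eK add1n ltnn.
set Rs := F :\: K.
have FKR : K :|: Rs = F.
  apply/setP => f; rewrite !inE; case: (boolP (f \in K)) => fK /=.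
    by rewrite (subsetP KF _ fK).
  by [].
have cR : #|Rs| = (#|F| - #|K|)%N by rewrite /Rs cardsD (setIidPr KF).
have KleF := subset_leq_card KF.
have binj : injective b.
  move=> i j E; apply/eqP; apply/negPn/negP => ij; move: (bdist i j ij).
  by rewrite /same_terminal_comp E connect0.
have cB : #|[set b i | i : 'I_m]| = m by rewrite card_imset // card_ord.
have cnt1 : (m <= #|Rs|.+1)%N.
  rewrite -{1}cB; apply: (@count_lemma V #|Rs| Rs K) => //.
  - by move=> e /setDP [eF _]; exact: (tree_pairs tr eF).
  - move=> x y /imsetP [i _ ->] /imsetP [j _ ->] xy; apply: Kdisc.
    by apply: contraNneq xy => ->.
  - move=> x y /imsetP [i _ ->] /imsetP [j _ ->]; rewrite FKR.
    have [_ _ conn _] := tr; exact: conn.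
set fanS := [set [set a; b i] | i : 'I_m].
have fan_inj : injective (fun i => [set a; b i]).
  by move=> i j /= E; apply: binj; apply: set2_inj E.
have cfan : #|fanS| = m by rewrite card_imset // card_ord.
have fanF : forall e, e \in fanS -> e \notin F.
  move=> e /imsetP [i _ ->]; apply/negP => eF.
  by have [_ aS' _] := edge_in tr eF; rewrite aS' in aS.
have Kfan : K :&: fanS = set0.
  apply/setP => f; rewrite in_setI in_set0; apply/negP => /andP [fK ff].
  by move: (fanF f ff); rewrite (subsetP KF _ fK).
set F' := K :|: fanS.
have cF' : #|F'| = (#|K| + m)%N by rewrite cardsU Kfan cards0 subn0 cfan.
have cS' : #|a |: S| = (#|S|).+1 by rewrite cardsU1 aS.
have conn' : forall u, u \in a |: S -> connect (edge_rel F') u a.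
  move=> u; rewrite in_setU1 => /orP [/eqP ->|uS]; first exact: connect0.
  have [i ci] := Kconn u uS.
  apply: (@connect_trans _ _ (b i)).
    by apply: conn_mono ci; exact: subsetUl.
  apply: connect1; rewrite /edge_rel setUC in_setU; apply/orP; right.
  by apply/imsetP; exists i.
have pF' : pairs F'.
  move=> e; rewrite in_setU => /orP [/(subsetP KF) eF|/imsetP [i _ ->]]; last by exists a, (b i).
  exact: (tree_pairs tr eF).
have cnt2 : (#|a |: S| <= #|F'|.+1)%N.
  apply: (conn_count pF') => u v uS' vS'.
  by rewrite (connect_trans (conn' u uS')) // connC conn'.
have [_ _ _ cF] := tr.
have Sn : (0 < #|S|)%N by rewrite card_gt0; apply/set0Pn; exists (b i0).
have [cRm cF'S] : (#|Rs|.+1 = m)%N /\ #|F'| = (#|a |: S| - 1)%N.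
  exact: (nat_arith cR KleF cnt1 cnt2 cF' cS' cF Sn).
have tr' : is_tree (a |: S) F'.
  split.
  - by apply/set0Pn; exists a; rewrite setU11.
  - move=> e; rewrite in_setU => /orP [/(subsetP KF) eF|/imsetP [i _ ->]].
      have [_ edg _ _] := tr; have [x [y [xy xS yS ->]]] := edg e eF.
      by exists x, y; rewrite !in_setU1 xS yS !orbT.
    exists a, (b i); split; rewrite ?setU11 ?in_setU1 ?bS ?orbT //.
    by rewrite eq_sym bna.
  - by move=> u v uS' vS'; rewrite (connect_trans (conn' u uS')) // connC conn'.
  - exact: cF'S.
have st' : steiner_tree T (a |: S) F'.
  by split => //; apply: subset_trans TS (subsetU1 a S).
have fi0 : [set a; b i0] \in fanS by apply/imsetP; exists i0.
have neq : F' != F by apply/eqP => E; move: (fanF _ fi0); rewrite -E in_setU fi0 orbT.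
have := stab_exch met g1 stab st' neq.
have D1 : F :\: F' = Rs.
  apply/setP => f; rewrite !in_setD in_setU negb_or.
  case: (boolP (f \in F)) => fF; rewrite ?andbF ?andbT //.
  case: (boolP (f \in fanS)) => ff; last by rewrite andbT.
  by move: (fanF f ff); rewrite fF.
have D2 : F' :\: F = fanS.
  apply/setP => f; rewrite in_setD in_setU.
  case: (boolP (f \in fanS)) => ff; first by rewrite orbT andbT fanF.
  rewrite orbF; case: (boolP (f \in K)) => fK; rewrite ?andbF //.
  by rewrite (subsetP KF _ fK).
rewrite D1 D2.
have Wfan : wsum d fanS = Sig.
  rewrite /wsum big_imset /=; last by move=> i j _ _; apply: fan_inj.
  by apply: eq_bigr => i _; rewrite dd_pair // eq_sym bna.
have WR : #|Rs|%:R * c <= wsum d Rs.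
  have : \sum_(e in Rs) c <= wsum d Rs.
    apply: ler_sum => e; rewrite in_setD => /andP [eK eF].
    rewrite leNgt; apply/negP => el.
    have eFH : e \notin FH.
      by apply: contra eK => eFH; apply: (subsetP G0K); rewrite inE eFH.
    have eL : e \in Light by rewrite inE eF eFH el.
    by move: eK; rewrite (subsetP G0K) // inE eL orbT.
  by rewrite sumr_const mulr_natl.
have Eq : gamma * (#|Rs|%:R * c) = Sig.
  have -> : #|Rs| = m.-1 by rewrite -cRm.
  rewrite /c /A /avg_weight -/Sig; field.
  by apply/andP; split; apply: lt0r_neq0.
rewrite Wfan => h.
have := ler_wpM2l (ltW g0) WR.
lra.
Qed.

Unset Implicit Arguments.
Set Strict Implicit.

Theorem mainTheorem9 (R : realFieldType) (V : finType) (d : V -> V -> R)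
  (T : {set V}) (gamma : R) (Sopt : {set V}) (Fopt : {set {set V}})
  (SH : {set V}) (FH : {set {set V}}) (a : V) (m : nat) (b : 'I_m -> V) :
  is_metric d ->
  1755%:R / 1000%:R < gamma ->
  gamma_stable d T gamma Sopt Fopt ->
  (forall u v, [set u; v] \in Fopt -> u \in T \/ v \in T) ->
  is_subgraph SH FH Sopt Fopt ->
  tc_fan T SH FH a b ->
  (forall u v, u != v -> [set u; v] \notin FH ->
     in_terminal_comp T SH u -> in_terminal_comp T SH v ->
     ~~ same_terminal_comp FH u v ->
     avg_weight d a b < d u v) ->
  (forall (a' : V) (m' : nat) (b' : 'I_m' -> V),
     tc_fan T SH FH a' b' -> avg_weight d a b <= avg_weight d a' b') ->
  (forall i j, d a (b i) <= (gamma - 1)^-1 * d a (b j)) ->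
  forall i, [set a; b i] \in Fopt.
Proof.
move=> met gam stab adj sub fan hi hii hiii.
case: (boolP (a \in Sopt)) => aS.
  exact: (caseIn met gam stab adj sub fan hii hiii aS).
by move=> i; exfalso; exact: (caseOut met gam stab adj sub fan hi hii aS).
Qed.
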